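(* Let $\mu:\mathbb{R}^{n\times n}\to\mathbb{R}$ be the matrix measure induced by a vector norm $|\cdot|$ on $\mathbb{R}^n$. The following four conditions are equivalent: (1) the norm $|\cdot|$ inducing $\mu$ is orthant-monotonic; (2) $\mu$ is admissible, i.e. $\mu(-D)\le 0$ for every $D\in\mathbb{D}^n_{\ge 0}$; (3) $\mu(D)=\max_i\{d_{ii}\}$ for every $D\in\mathbb{D}^n_{\ge 0}$; (4) there exists a matrix $A\in\mathbb{R}^{n\times n}$ such that $\mu(A-D)<0$ for all $D\in\mathbb{D}^n_{\ge 0}$.
   Context: $\mathbb{D}^n_{\ge 0}$ denotes the set of $n\times n$ diagonal matrices with nonnegative diagonal entries $d_{ii}$. For a vector norm $|\cdot|$ on $\mathbb{R}^n$, the induced matrix norm is $\|A\|=\max_{|x|=1}|Ax|$ and the induced matrix measure (logarithmic norm) is $\mu(A)=\lim_{\varepsilon\to0^+}(\|I_n+\varepsilon A\|-1)/\varepsilon$. A norm $|\cdot|$ on $\mathbb{R}^n$ is orthant-monotonic if for all $x,y\in\mathbb{R}^n$: whenever $x_iy_i\ge 0$ and $|x_i|\le|y_i|$ (absolute values) for all $i$, then $|x|\le|y|$. *)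

(* Defs.v *)
From HB Require Import structures.
From mathcomp Require Import all_boot all_order all_algebra.
From mathcomp Require Import all_classical all_reals all_analysis.
Set Implicit Arguments. Unset Strict Implicit. Unset Printing Implicit Defensive.
Import Order.TTheory GRing.Theory Num.Theory.
Import numFieldNormedType.Exports.
Local Open Scope classical_set_scope.
Local Open Scope ring_scope.

Definition is_vnorm (R : realType) (n : nat) (N : 'cV[R]_n -> R) : Prop :=
  [/\ forall x, 0 <= N x,
      forall x, N x = 0 -> x = 0,
      forall (a : R) x, N (a *: x) = `|a| * N x
    & forall x y, N (x + y) <= N x + N y].

(* Induced matrix norm ||A|| = max_{|x| = 1} |A x| (written as a sup; it is attained). *)
Definition induced_norm (R : realType) (n : nat) (N : 'cV[R]_n -> R)
  (A : 'M[R]_n) : R :=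
  sup [set N (A *m x) | x in [set x | N x = 1]].

Definition matrix_measure (R : realType) (n : nat) (N : 'cV[R]_n -> R)
  (A : 'M[R]_n) : R :=
  lim ((fun eps : R => (induced_norm N (1%:M + eps *: A) - 1) / eps) @ 0^'+).

Definition orthant_monotonic (R : realType) (n : nat) (N : 'cV[R]_n -> R) : Prop :=
  forall x y : 'cV[R]_n,
    (forall i, 0 <= x i 0 * y i 0 /\ `|x i 0| <= `|y i 0|) -> N x <= N y.

Definition diag_nonneg (R : realType) (n : nat) (D : 'M[R]_n) : Prop :=
  (forall i j, i != j -> D i j = 0) /\ (forall i, 0 <= D i i).

(* max_i d_ii (entries are nonnegative here, so 0 as neutral element is harmless). *)
Definition max_diag (R : realType) (n : nat) (D : 'M[R]_n) : R :=
  \big[Num.max/0]_(i < n) D i i.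

(* Main.v *)
Require Import Defs.
From HB Require Import structures.
From mathcomp Require Import all_boot all_order all_algebra.
From mathcomp Require Import all_classical all_reals all_analysis.
From mathcomp Require Import ring lra.
Import Order.TTheory GRing.Theory Num.Theory.

Module P1.
Import Order.TTheory GRing.Theory Num.Theory.
Import numFieldNormedType.Exports.
Local Open Scope classical_set_scope.
Local Open Scope ring_scope.

Section NE.
Variables (R : realType) (n : nat) (N : 'rV[R]_n -> R).
Hypothesis N0 : forall x, 0 <= N x.
Hypothesis Ndef : forall x, N x = 0 -> x = 0.
Hypothesis NZ : forall (a : R) x, N (a *: x) = `|a| * N x.
Hypothesis ND : forall x y, N (x + y) <= N x + N y.

Lemma Nsum (I : finType) (a : I -> R) (v : I -> 'rV[R]_n) :
  N (\sum_i a i *: v i) <= \sum_i `|a i| * N (v i).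
Proof.
elim/big_rec2: _ => [|j y1 y2 _ IH].
  by have := NZ 0 0; rewrite scale0r normr0 mul0r => ->.
by apply: le_trans (ND _ _) _; rewrite NZ lerD2l.
Qed.

Lemma entry_le (v : 'rV[R]_n) j : `|v 0 j| <= `|v|.
Proof.
have /mapP[k Hk ->] : `|v 0 j| \in [seq `|v x.1 x.2| | x : 'I_1 * 'I_n].
  by apply/mapP; exists (0, j) => //=; rewrite mem_enum.
by rewrite [leRHS]/Num.Def.normr /= mx_normrE; apply/bigmax_geP; right => /=; exists k.
Qed.

Definition Csum := \sum_j N (delta_mx 0 j).

Lemma N_le_mx (v : 'rV[R]_n) : N v <= `|v| * Csum.
Proof.
have E : v = \sum_j v 0 j *: delta_mx 0 j.
  rewrite {1}(matrix_sum_delta v) big_ord1; apply: eq_bigr => j _.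
  by rewrite (ord1 0).
rewrite {1}E.
apply: le_trans (Nsum _ _ _) _; rewrite /Csum mulr_sumr; apply: ler_sum => j _.
apply: ler_wpM2r => //; exact: entry_le.
Qed.


Lemma NN x : N (- x) = N x.
Proof. by rewrite -scaleN1r NZ normrN normr1 mul1r. Qed.

Lemma N_diff u v : `|N v - N u| <= N (v - u).
Proof.
have h1 := ND (v - u) u; have h2 := ND (u - v) v.
rewrite !subrK in h1 h2; rewrite -opprB NN in h2.
rewrite ler_norml; apply/andP; split; lra.
Qed.

Lemma N_cont : continuous N.
Proof.
move=> v; apply/(@cvgrPdist_lt _ _ _ (nbhs v) (nbhs_filter v)) => e e0.
have C0 : 0 <= Csum by apply: sumr_ge0 => j _; exact: N0.
have d0 : 0 < e / (Csum + 1) by rewrite divr_gt0 // ltr_wpDl.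
near=> u.
apply: le_lt_trans (N_diff _ _) _.
apply: le_lt_trans (N_le_mx _) _.
have : `|v - u| < e / (Csum + 1).
  near: u; have := @near_ball _ _ v _ d0; apply: filterS => u.
  by rewrite -ball_normE /ball_.
rewrite ltr_pdivlMr ?ltr_wpDl //; apply: le_lt_trans.
by apply: ler_wpM2l => //; rewrite lerDl.
Unshelve. all: by end_near.
Qed.

Lemma N_lb : exists2 c, 0 < c & forall v, `|v| <= c * N v.
Proof.
set S := [set v : 'rV[R]_n | `|v| = 1].
have cS : compact S.
  apply: (@bounded_closed_compact R n S).
    exists 1; split => // M M1 v /= ->; exact: ltW.
  apply: (@preimage_closed _ _ (fun v : 'rV[R]_n => `|v|) [set x : R | x = 1]); last exact: closed_eq.
  by move=> x _; exact: norm_continuous.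
have cK := continuous_compact (@continuous_subspaceT _ _ S N N_cont) cS.
have clK := compact_closed (@norm_hausdorff _ _) cK.
have nK0 : ~ (N @` S) 0.
  case=> v Sv /Ndef v0; move: Sv; rewrite /S /= v0 normr0 => /eqP.
  by rewrite eq_sym oner_eq0.
have /nbhs_ballP[e /= e0 He] : nbhs (0:R) (~` (N @` S)).
  exact: (closed_openC clK).
have HS : forall v, S v -> e <= N v.
  move=> v Sv; rewrite leNgt; apply/negP => Nve.
  apply: (He (N v)); last by exists v.
  by rewrite -ball_normE /ball_ /= sub0r normrN ger0_norm.
exists e^-1; first by rewrite invr_gt0.
move=> v; have [->|v0] := eqVneq v 0; first by rewrite normr0 mulr_ge0 ?invr_ge0 ?N0 // ltW.
have nv0 : 0 < `|v| by rewrite normr_gt0.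
have := HS (`|v|^-1 *: v); rewrite /S /= normrZ normfV normr_id mulVf ?gt_eqF // => /(_ erefl).
rewrite NZ normfV normr_id ler_pdivlMl // => h.
by rewrite ler_pdivlMl // mulrC.
Qed.

End NE.

End P1.
Import P1.

Module P2.
Import Order.TTheory GRing.Theory Num.Theory.
Import numFieldNormedType.Exports.
Local Open Scope classical_set_scope.
Local Open Scope ring_scope.

Section Main.
Variables (R : realType) (n : nat) (N : 'cV[R]_n -> R).
Hypothesis hN : is_vnorm N.
Hypothesis hn : (0 < n)%N.

Lemma N0 x : 0 <= N x. Proof. by case: hN. Qed.
Lemma Ndef x : N x = 0 -> x = 0. Proof. by case: hN => _ h _ _; apply: h. Qed.
Lemma NZ (a : R) x : N (a *: x) = `|a| * N x. Proof. by case: hN. Qed.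
Lemma ND x y : N (x + y) <= N x + N y. Proof. by case: hN. Qed.

Lemma Nzero : N 0 = 0.
Proof. by have := NZ 0 0; rewrite scale0r normr0 mul0r. Qed.

Lemma NsumC (I : finType) (a : I -> R) (v : I -> 'cV[R]_n) :
  N (\sum_i a i *: v i) <= \sum_i `|a i| * N (v i).
Proof.
elim/big_rec2: _ => [|j y1 y2 _ IH]; first by rewrite Nzero.
by apply: le_trans (ND _ _) _; rewrite NZ lerD2l.
Qed.

Lemma Nc : exists2 c, 0 < c & forall (x : 'cV[R]_n) i, `|x i 0| <= c * N x.
Proof.
have h2 : forall x : 'rV[R]_n, N x^T = 0 -> x = 0.
  by move=> x /Ndef h; apply: trmx_inj; rewrite h trmx0.
have h3 : forall (a : R) (x : 'rV[R]_n), N (a *: x)^T = `|a| * N x^T.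
  by move=> a x; rewrite linearZ /= NZ.
have h4 : forall x y : 'rV[R]_n, N (x + y)^T <= N x^T + N y^T.
  by move=> x y; rewrite linearD /= ND.
have [c c0 Hc] := @N_lb R n (fun v => N v^T) (fun x => N0 _) h2 h3 h4.
exists c => // x i.
have := Hc x^T; rewrite trmxK; apply: le_trans.
by have := @entry_le R n x^T i; rewrite mxE.
Qed.

Lemma decomp (x : 'cV[R]_n) : x = \sum_j x j 0 *: delta_mx j 0.
Proof.
rewrite {1}(matrix_sum_delta x); apply: eq_bigr => j _.
by rewrite big_ord1.
Qed.

Lemma BA (M : 'M[R]_n) : exists B, forall x, N (M *m x) <= B * N x.
Proof.
have [c c0 Hc] := Nc.
exists (c * \sum_j N (M *m delta_mx j 0)) => x.
rewrite {1}(decomp x) mulmx_sumr.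
under eq_bigr do rewrite -scalemxAr.
apply: le_trans (NsumC _ _ _) _.
rewrite mulr_sumr mulr_suml; apply: ler_sum => j _.
rewrite mulrAC; apply: ler_wpM2r; first exact: N0.
by apply: Hc.
Qed.

Definition e0 : 'cV[R]_n := delta_mx (Ordinal hn) 0.
Lemma Ne0 : 0 < N e0.
Proof.
rewrite lt_neqAle N0 andbT eq_sym; apply/eqP => /Ndef /matrixP /(_ (Ordinal hn) 0).
by rewrite !mxE !eqxx /= => /eqP; rewrite oner_eq0.
Qed.
Definition u0 := (N e0)^-1 *: e0.
Lemma Nu0 : N u0 = 1.
Proof. by rewrite /u0 NZ normfV ger0_norm ?N0 // mulVf // gt_eqF // Ne0. Qed.

Definition nrm (M : 'M[R]_n) := induced_norm N M.

Lemma has_sup_T M : has_sup [set N (M *m x) | x in [set x | N x = 1]].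
Proof.
split; first by exists (N (M *m u0)), u0 => //; exact: Nu0.
have [B HB] := BA M.
by exists B => y [x /= Ux <-]; apply: le_trans (HB x) _; rewrite Ux mulr1.
Qed.

Lemma nrm_ub M x : N x = 1 -> N (M *m x) <= nrm M.
Proof. by move=> Ux; apply: ub_le_sup (has_sup_T M).2 _ _; exists x. Qed.

Lemma nrm_ge0 M : 0 <= nrm M.
Proof. exact: le_trans (N0 _) (nrm_ub M u0 Nu0). Qed.

Lemma nrm_bound M x : N (M *m x) <= nrm M * N x.
Proof.
have [/Ndef ->|nx] := eqVneq (N x) 0; first by rewrite mulmx0 Nzero mulr0.
have nx0 : 0 < N x by rewrite lt_neqAle eq_sym nx N0.
have := nrm_ub M ((N x)^-1 *: x).
rewrite NZ -scalemxAr NZ normfV ger0_norm ?N0 // mulVf // => /(_ erefl).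
by rewrite ler_pdivrMl // mulrC.
Qed.

Lemma nrm_le M c : (forall x, N x = 1 -> N (M *m x) <= c) -> nrm M <= c.
Proof.
move=> H; apply: ge_sup; first by exists (N (M *m u0)), u0 => //; exact: Nu0.
by move=> y [x /= Ux <-]; apply: H.
Qed.

Lemma nrm1 : nrm 1%:M = 1.
Proof.
apply/eqP; rewrite eq_le; apply/andP; split.
  by apply: nrm_le => x Ux; rewrite mul1mx Ux.
by have := nrm_ub 1%:M u0 Nu0; rewrite mul1mx Nu0.
Qed.

Lemma nrmD A B : nrm (A + B) <= nrm A + nrm B.
Proof.
apply: nrm_le => x Ux; rewrite mulmxDl; apply: le_trans (ND _ _) _.
by apply: lerD; apply: nrm_ub.
Qed.

Lemma nrmZ a A : nrm (a *: A) <= `|a| * nrm A.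
Proof.
apply: nrm_le => x Ux; rewrite -scalemxAl NZ; apply: ler_wpM2l => //.
exact: nrm_ub.
Qed.

Lemma nrmM A B : nrm (A *m B) <= nrm A * nrm B.
Proof.
apply: nrm_le => x Ux; rewrite -mulmxA; apply: le_trans (nrm_bound _ _) _.
by apply: ler_wpM2l; [exact: nrm_ge0 | exact: nrm_ub].
Qed.


Definition f (A : 'M[R]_n) (e : R) := (nrm (1%:M + e *: A) - 1) / e.
Definition mu (A : 'M[R]_n) := matrix_measure N A.

Lemma f_lb A e : 0 < e -> - nrm A <= f A e.
Proof.
move=> e0; rewrite /f ler_pdivlMr //.
have := nrmD (1%:M + e *: A) ((- e) *: A).
rewrite scaleNr addrK.
have nZ := nrmZ (- e) A; rewrite scaleNr in nZ.
rewrite nrm1 => h; have := le_trans h (lerD (lexx _) nZ).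
rewrite normrN gtr0_norm // => h2; lra.
Qed.

Lemma f_mono A s t : 0 < s -> s <= t -> f A s <= f A t.
Proof.
move=> s0 st; have t0 : 0 < t by apply: lt_le_trans st.
have E : 1%:M + s *: A = (s / t) *: (1%:M + t *: A) + (1 - s / t) *: 1%:M.
  rewrite scalerDr scalerA divfK ?gt_eqF // addrAC -scalerDl.
  by rewrite addrCA subrr addr0 scale1r.
have q0 : 0 <= s / t by rewrite divr_ge0 // ltW.
have q1 : s / t <= 1 by rewrite ler_pdivrMr // mul1r.
have h : nrm (1%:M + s *: A) <= s / t * nrm (1%:M + t *: A) + (1 - s / t).
  rewrite E; apply: le_trans (nrmD _ _) _; apply: lerD.
    by apply: le_trans (nrmZ _ _) _; rewrite ger0_norm.
  by apply: le_trans (nrmZ _ _) _; rewrite nrm1 mulr1 ger0_norm // subr_ge0.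
rewrite /f ler_pdivrMr //.
have -> : (nrm (1%:M + t *: A) - 1) / t * s = s / t * nrm (1%:M + t *: A) - s / t.
  by ring.
lra.
Qed.

Definition Ipos := [set` Interval (BRight (0:R)) (BInfty R false)].

Lemma IposE e : Ipos e <-> 0 < e.
Proof. by rewrite /Ipos /= in_itv /= andbT. Qed.

Lemma mu_inf A : mu A = inf (f A @` Ipos).
Proof.
rewrite /mu /matrix_measure; apply: cvg_lim => //.
apply: nondecreasing_at_right_cvgr => //.
  move=> a b; rewrite !in_itv /= !andbT => a0 b0 ab; exact: f_mono.
exists (- nrm A) => y [e /IposE e0 <-]; exact: f_lb.
Qed.

Lemma hlb A : has_lbound (f A @` Ipos).
Proof. by exists (- nrm A) => y [e /IposE e0 <-]; exact: f_lb. Qed.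

Lemma mu_le A e : 0 < e -> mu A <= f A e.
Proof.
move=> e0; rewrite mu_inf; apply: ge_inf; first exact: hlb.
by exists e => //; apply/IposE.
Qed.

Lemma mu_ge A c : (forall e, 0 < e -> c <= f A e) -> c <= mu A.
Proof.
move=> H; rewrite mu_inf; apply: lb_le_inf.
  by exists (f A 1), 1 => //; apply/IposE.
by move=> y [e /IposE e0 <-]; apply: H.
Qed.

Lemma mu_small A c : mu A < c ->
  exists2 e0, 0 < e0 & forall e, 0 < e -> e <= e0 -> f A e < c.
Proof.
rewrite mu_inf => /inf_lt[].
  by exists (f A 1), 1 => //; apply/IposE.
move=> y [e0 /IposE e00 <-] h; exists e0 => // e e0' ee.
by apply: le_lt_trans (f_mono A e e0 e0' ee) h.
Qed.


Lemma f_sub A B e : 0 < e -> f (A + B) e <= f A (2 * e) + f B (2 * e).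
Proof.
move=> e0.
have E : 1%:M + e *: (A + B) =
   (1/2 : R) *: (1%:M + (2 * e) *: A) + (1/2 : R) *: (1%:M + (2 * e) *: B).
  have h1 : (1/2 : R) * (2 * e) = e by field.
  have h2 : (1/2 : R) + 1/2 = 1 by field.
  rewrite !scalerDr !scalerA h1 addrACA -scalerDl h2 scale1r//.
have h : nrm (1%:M + e *: (A + B)) <=
   1/2 * nrm (1%:M + (2 * e) *: A) + 1/2 * nrm (1%:M + (2 * e) *: B).
  rewrite E; apply: le_trans (nrmD _ _) _; apply: lerD;
  by apply: le_trans (nrmZ _ _) _; rewrite ger0_norm.
rewrite /f.
set a := nrm (1%:M + e *: (A + B)) in h *.
set b := nrm (1%:M + (2 * e) *: A) in h *.
set c := nrm (1%:M + (2 * e) *: B) in h *.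
have -> : (b - 1) / (2 * e) + (c - 1) / (2 * e) = (1/2 * b + 1/2 * c - 1) / e.
  by field; rewrite gt_eqF.
by rewrite ler_pM2r ?invr_gt0 // lerD2r.
Qed.

Lemma mu_sub A B : mu (A + B) <= mu A + mu B.
Proof.
apply/ler_addgt0Pr => d d0.
have d2 : 0 < d / 2 by rewrite divr_gt0.
have hA : mu A < mu A + d / 2 by rewrite ltrDl.
have hB : mu B < mu B + d / 2 by rewrite ltrDl.
have [eA eA0 HA] := mu_small _ _ hA.
have [eB eB0 HB] := mu_small _ _ hB.
set e := Num.min eA eB / 2.
have e0 : 0 < e by rewrite divr_gt0 // lt_min eA0.
have eAe : 2 * e <= eA by rewrite /e mulrC divfK ?pnatr_eq0 // ge_min lexx.
have eBe : 2 * e <= eB by rewrite /e mulrC divfK ?pnatr_eq0 // ge_min lexx orbT.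
have e2 : 0 < 2 * e by rewrite mulr_gt0.
have := HA _ e2 eAe; have := HB _ e2 eBe.
have := f_sub A B e e0; have := mu_le (A + B) e e0.
lra.
Qed.

Lemma nrm_scal M c : (forall x : 'cV[R]_n, M *m x = c *: x) -> nrm M = `|c|.
Proof.
move=> HM; apply/eqP; rewrite eq_le; apply/andP; split.
  by apply: nrm_le => x Ux; rewrite HM NZ Ux mulr1.
by have := nrm_ub M u0 Nu0; rewrite HM NZ Nu0 mulr1.
Qed.

Lemma mu_scalar a : mu (a%:M) = a.
Proof.
have Hf : forall e, f a%:M e = (`|1 + e * a| - 1) / e.
  move=> e; rewrite /f (@nrm_scal _ (1 + e * a)) // => x.
  by rewrite mulmxDl mul1mx -scalemxAl mul_scalar_mx scalerA scalerDl scale1r.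
apply/eqP; rewrite eq_le; apply/andP; split.
  have e0 : 0 < (`|a| + 1)^-1 by rewrite invr_gt0 ltr_wpDl.
  apply: le_trans (mu_le _ _ e0) _; rewrite Hf.
  have h : 0 <= 1 + (`|a| + 1)^-1 * a.
    have ht : (`|a| + 1)^-1 * (`|a| + 1) = 1 by rewrite mulVf // gt_eqF // ltr_wpDl.
    have ha : - `|a| <= a by rewrite lerNl -normrN ler_norm.
    move: e0 ht ha; set t := (`|a| + 1)^-1; nra.
  rewrite ger0_norm // addrAC subrr add0r mulrAC divff ?gt_eqF // mul1r //.
apply: mu_ge => e e0; rewrite Hf ler_pdivlMr //.
by rewrite lerBrDl mulrC; apply: ler_norm.
Qed.

Lemma mu_scale s X : 0 < s -> s * mu X <= mu (s *: X).
Proof.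
move=> s0; apply: mu_ge => e e0.
have -> : f (s *: X) e = s * f X (e * s).
  by rewrite /f scalerA; field; rewrite !gt_eqF.
by rewrite ler_pM2l //; apply: mu_le; rewrite mulr_gt0.
Qed.

Definition diagm (D : 'M[R]_n) := forall i j, i != j -> D i j = 0.

Lemma diag_mul D (x : 'cV[R]_n) i : diagm D -> (D *m x) i 0 = D i i * x i 0.
Proof.
move=> hD; rewrite mxE (bigD1 i) //= big1 ?addr0 // => j hj.
by rewrite hD ?mul0r // eq_sym.
Qed.

Lemma Nei i : 0 < N (delta_mx i 0).
Proof.
rewrite lt_neqAle N0 andbT eq_sym; apply/eqP => /Ndef /matrixP /(_ i 0).
by rewrite !mxE !eqxx /= => /eqP; rewrite oner_eq0.
Qed.

Lemma mu_diag_ge D i : diagm D -> D i i <= mu D.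
Proof.
move=> hD; apply: mu_ge => e e0.
have hD' : diagm (1%:M + e *: D).
  by move=> k l kl; rewrite !mxE hD // (negbTE kl) mulr0 addr0.
have E : (1%:M + e *: D) *m (delta_mx i 0 : 'cV[R]_n) = (1 + e * D i i) *: (delta_mx i 0 : 'cV[R]_n).
  apply/matrixP => k l; rewrite (ord1 l) diag_mul // !mxE.
  have [->|ki] := eqVneq k i; first by rewrite !eqxx.
  by rewrite /= !mulr0.
have := nrm_bound (1%:M + e *: D) (delta_mx i 0).
rewrite E NZ ler_pM2r ?Nei // => h.
rewrite /f ler_pdivlMr // lerBrDl mulrC; apply: le_trans h.
exact: ler_norm.
Qed.

End Main.

End P2.
Import P2.

Module P3.
Import Order.TTheory GRing.Theory Num.Theory.
Import numFieldNormedType.Exports.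
Local Open Scope classical_set_scope.
Local Open Scope ring_scope.

Section Main2.
Variables (R : realType) (n : nat) (N : 'cV[R]_n -> R).
Hypothesis hN : is_vnorm N.
Hypothesis hn : (0 < n)%N.

Local Notation N0 := (@N0 R n N hN).
Local Notation Ndef := (@Ndef R n N hN).
Local Notation NZ := (@NZ R n N hN).
Local Notation ND := (@ND R n N hN).
Local Notation Nzero := (@Nzero R n N hN).
Local Notation nrm := (@P2.nrm R n N).
Local Notation f := (@P2.f R n N).
Local Notation mu := (@P2.mu R n N).
Local Notation diagm := (@P2.diagm R n).
Local Notation nrm_bound := (@nrm_bound R n N hN hn).
Local Notation nrm_le := (@nrm_le R n N hN hn).
Local Notation nrm_ub := (@nrm_ub R n N hN hn).
Local Notation nrm1 := (@nrm1 R n N hN hn).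
Local Notation nrmD := (@nrmD R n N hN hn).
Local Notation nrmZ := (@nrmZ R n N hN hn).
Local Notation nrmM := (@nrmM R n N hN hn).
Local Notation nrm_ge0 := (@nrm_ge0 R n N hN hn).
Local Notation f_mono := (@f_mono R n N hN hn).
Local Notation mu_le := (@mu_le R n N hN hn).
Local Notation mu_ge := (@mu_ge R n N hN hn).
Local Notation mu_small := (@mu_small R n N hN hn).
Local Notation mu_sub := (@mu_sub R n N hN hn).
Local Notation mu_scalar := (@mu_scalar R n N hN hn).
Local Notation mu_scale := (@mu_scale R n N hN hn).
Local Notation diag_mul := (@diag_mul R n).
Local Notation mu_diag_ge := (@mu_diag_ge R n N hN hn).
Local Notation Nei := (@Nei R n N hN).


Lemma md_ge (D : 'M[R]_n) i : D i i <= max_diag D.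
Proof. exact: (@le_bigmax _ _ _ 0 (fun i => D i i) i). Qed.

Lemma md_le (D : 'M[R]_n) c : 0 <= c -> (forall i, D i i <= c) -> max_diag D <= c.
Proof. by move=> c0 H; apply: (@bigmax_le _ _ _ _ (fun i => D i i) 0 c xpredT). Qed.

Lemma md_arg (D : 'M[R]_n) : diag_nonneg D -> exists i, max_diag D = D i i.
Proof.
move=> [_ Dnn]; eexists; rewrite /max_diag.
by apply: (@bigmax_eq_arg _ _ _ 0 (Ordinal hn) xpredT (fun i => D i i)).
Qed.

Lemma dn_diag D : diag_nonneg D -> diagm D.
Proof. by case. Qed.

Lemma diag1 D e : diagm D -> diagm (1%:M + e *: D).
Proof. by move=> hD k l kl; rewrite !mxE hD // (negbTE kl) mulr0 addr0. Qed.

Lemma i13 : orthant_monotonic N ->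
  forall D, diag_nonneg D -> mu D = max_diag D.
Proof.
move=> OM D hD; have hd := dn_diag D hD; have [i0 Hi0] := md_arg D hD; case: hD => _ Dnn.
set m := max_diag D.
have m0 : 0 <= m by apply: le_trans (Dnn (Ordinal hn)) (md_ge _ _).
apply/eqP; rewrite eq_le; apply/andP; split; last first.
  by rewrite /m Hi0; apply: mu_diag_ge.
apply: le_trans (mu_le D 1 ltr01) _.
rewrite /P2.f divr1 lerBlDl; apply: nrm_le => x Ux.
have -> : 1 + m = N ((1 + m) *: x) by rewrite NZ Ux mulr1 ger0_norm // addr_ge0.
apply: OM => i; rewrite diag_mul; last exact: diag1.
rewrite !mxE eqxx mulr1n mul1r.
have hi := md_ge D i; have := Dnn i; fold m in hi => hi2.
have h1 : 0 <= 1 + D i i by rewrite addr_ge0.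
have h2 : 0 <= 1 + m by rewrite addr_ge0.
split.
  have -> : (1 + D i i) * x i 0 * ((1 + m) * x i 0) = ((1 + D i i) * (1+m)) * (x i 0 ^+ 2) by ring.
  by apply: mulr_ge0; [apply: mulr_ge0 | apply: sqr_ge0].
by rewrite !normrM ler_wpM2r // !ger0_norm // lerD2l.
Qed.


Lemma i32 : (forall D, diag_nonneg D -> mu D = max_diag D) ->
  forall D, diag_nonneg D -> mu (- D) <= 0.
Proof.
move=> H3 D hD; have hD' := hD; case: hD' => Doff Dnn.
set c := max_diag D.
have c0 : 0 <= c by apply: le_trans (Dnn (Ordinal hn)) (md_ge _ _).
have hD2 : diag_nonneg (c%:M - D).
  split=> [i j ij|i]; first by rewrite !mxE Doff // (negbTE ij) mulr0n subr0.
  by rewrite !mxE eqxx mulr1n subr_ge0 md_ge.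
have E : - D = (c%:M - D) + (- c)%:M.
  apply/matrixP => i j; rewrite !mxE.
  by case: (i == j); rewrite ?mulr1n ?mulr0n; ring.
rewrite E; apply: le_trans (mu_sub _ _) _.
rewrite mu_scalar H3 // subr_le0.
by apply: md_le => // i; rewrite !mxE eqxx mulr1n lerBlDr lerDl.
Qed.

Lemma i34 : (forall D, diag_nonneg D -> mu D = max_diag D) ->
  exists A, forall D, diag_nonneg D -> mu (A - D) < 0.
Proof.
move=> H3; exists (-1)%:M => D hD.
apply: le_lt_trans (mu_sub _ _) _.
rewrite mu_scalar; have := i32 H3 D hD; lra.
Qed.

Lemma i42 : (exists A, forall D, diag_nonneg D -> mu (A - D) < 0) ->
  forall D, diag_nonneg D -> mu (- D) <= 0.
Proof.
move=> [A HA] D hD; rewrite leNgt; apply/negP => hpos.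
have Hs : forall s, 0 < s -> s * mu (- D) < mu (- A).
  move=> s s0.
  have hsD : diag_nonneg (s *: D).
    case: hD => Doff Dnn; split=> [i j ij|i]; rewrite mxE.
      by rewrite Doff // mulr0.
    by rewrite mulr_ge0 // ltW.
  have h1 := HA _ hsD.
  have h2 : mu (- (s *: D)) <= mu (A - s *: D) + mu (- A).
    have := mu_sub (A - s *: D) (- A).
    have -> : A - s *: D + - A = - (s *: D) by rewrite addrC addKr.
    by [].
  have h3 := mu_scale s (- D) s0.
  rewrite scalerN in h3.
  apply: le_lt_trans h3 _; apply: le_lt_trans h2 _.
  by rewrite -ltrBrDr subrr.
set a := mu (- A).
have s0 : 0 < (`|a| + 1) / mu (- D) by rewrite divr_gt0 // ltr_wpDl.
have := Hs _ s0; rewrite divfK ?gt_eqF //.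
by rewrite ltNge (le_trans (ler_norm a)) // lerDl.
Qed.

Definition Em (i : 'I_n) : 'M[R]_n := delta_mx i i.
Definition P i t := 1%:M - t *: Em i.

Lemma EE i : Em i *m Em i = Em i.
Proof. exact: mul_delta_mx. Qed.

Lemma PM i a b : P i a *m P i b = P i (a + b - a * b).
Proof.
rewrite /P mulmxBl !mulmxBr !mul1mx !mulmx1 -!scalemxAl -!scalemxAr EE scalerA.
by apply/matrixP => p q; rewrite !mxE; ring.
Qed.

Fixpoint mpow (M : 'M[R]_n) k := if k is k'.+1 then M *m mpow M k' else 1%:M.

Lemma nrm_pow M k : nrm (mpow M k) <= nrm M ^+ k.
Proof.
elim: k => [|k IH] /=; first by rewrite nrm1 expr0.
apply: le_trans (nrmM _ _) _; rewrite exprS.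
by apply: ler_wpM2l => //; exact: nrm_ge0.
Qed.

Lemma pow_P i a k : mpow (P i a) k = P i (1 - (1 - a) ^+ k).
Proof.
elim: k => [|k IH] /=; first by rewrite expr0 subrr /P scale0r subr0.
by rewrite IH PM exprS; congr (P i _); ring.
Qed.

Lemma bern (x : R) k : -1 <= x -> 1 + k%:R * x <= (1 + x) ^+ k.
Proof.
move=> hx; elim: k => [|k IH]; first by rewrite mul0r addr0 expr0.
rewrite exprS -natr1.
have h1 : 0 <= 1 + x by lra.
have := ler_wpM2l h1 IH.
have : 0 <= k%:R * x ^+ 2 by rewrite mulr_ge0 ?sqr_ge0.
rewrite expr2; nra.
Qed.

Lemma G (a : R) k : -1 <= a <= 1 -> (1 + a) ^+ k * (1 - k%:R * a) <= 1.
Proof.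
move=> /andP[a1 a2].
have h1 : 1 - k%:R * a <= (1 - a) ^+ k.
  have ha : -1 <= - a by rewrite lerN2.
  by have := @bern (- a) k ha; rewrite mulrN.
apply: le_trans (ler_wpM2l _ h1) _; first by apply: exprn_ge0; lra.
rewrite -exprMn; apply: exprn_ile1; nra.
Qed.


Lemma Em_dn i : diag_nonneg (Em i).
Proof.
split=> [p q pq|p]; rewrite mxE; last by case: (_ && _).
apply/eqP; rewrite pnatr_eq0 eqb0; apply: contraNN pq.
by case/andP => /eqP -> /eqP ->.
Qed.

Lemma claimA_lt i t : (forall D, diag_nonneg D -> mu (- D) <= 0) ->
  0 <= t -> t < 1 -> nrm (P i t) <= 1.
Proof.
move=> H2 t0 t1.
have [->|tn0] := eqVneq t 0; first by rewrite /P scale0r subr0 nrm1.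
have tpos : 0 < t by rewrite lt_neqAle eq_sym tn0.
set q := 1 - t.
have q0 : 0 < q by rewrite subr_gt0.
set c := t / q.
have c0 : 0 < c by rewrite divr_gt0.
apply/ler_addgt0Pr => eta eta0.
set d := eta / (c * (1 + eta)).
have d0 : 0 < d by rewrite divr_gt0 // mulr_gt0 // ltr_wpDl.
have hmu := H2 _ (Em_dn i).
have [e0 e00 He0] := mu_small (- Em i) d (le_lt_trans hmu d0).
have He : forall e, 0 < e -> e <= e0 -> nrm (P i e) < 1 + d * e.
  move=> e e_0 ee; have := He0 e e_0 ee.
  rewrite /P2.f scalerN ltr_pdivrMr // => h.
  by rewrite /P; lra.
set e1 := Num.min e0 (Num.min (1/2) (1 + d)^-1).
have h12 : (0:R) < 1/2 by rewrite divr_gt0.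
have hd1 : 0 < (1 + d)^-1 by rewrite invr_gt0 ltr_wpDl // ltW.
have e10 : 0 < e1 by rewrite !lt_min e00 h12 hd1.
have e1e0 : e1 <= e0 by rewrite ge_min lexx.
have e1h : e1 <= 1/2 by rewrite /e1 !ge_min lexx orbT.
have e1d : e1 <= (1 + d)^-1 by rewrite /e1 !ge_min lexx !orbT.
have de1 : d * e1 <= 1.
  have := ler_wpM2l (ltW d0) e1d.
  move=> h; apply: le_trans h _; rewrite ler_pdivrMr ?ltr_wpDl // mul1r; lra.
set k := (Num.trunc ((q * e1)^-1)).+1.
have hk : (q * e1)^-1 < k%:R by apply: truncnS_gt.
have gk : (1 - e1) ^+ k <= q.
  have h := @G (- e1) k (ltac:(apply/andP; split; lra)).
  rewrite mulrN opprK in h.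
  have hk2 : 1 < q * (1 + k%:R * e1).
    have qe : 0 < q * e1 by rewrite mulr_gt0.
    rewrite -(ltr_pM2r qe) mulVf ?gt_eqF // in hk.
    nra.
  have hpos : 0 <= (1 - e1) ^+ k by apply: exprn_ge0; lra.
  nra.
have [e he ge] : exists2 e, e \in `[0, e1] & (fun x => unstable.onem x ^+ k) e = q.
  apply: IVT; first exact: ltW.
    apply: continuous_subspaceT => x; exact: continuous_onemXn.
  rewrite /unstable.onem subr0 expr1n.
  rewrite ge_min le_max gk orbT /=.
  by rewrite /q lerBlDr lerDl ltW.
rewrite /= /unstable.onem in ge.
move: he; rewrite in_itv /= => /andP[ege0 ege1].
have epos : 0 < e.
  rewrite lt_neqAle ege0 andbT; apply/eqP => e_0.
  by move: ge; rewrite -e_0 subr0 expr1n /q => /eqP; rewrite eq_sym subr_eq addrC -subr_eq subrr eq_sym (negbTE tn0).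
have hPe := He e epos (le_trans ege1 e1e0).
have EP : P i t = mpow (P i e) k by rewrite pow_P ge /q opprB addrC subrK.
have hY : nrm (P i t) <= (1 + d * e) ^+ k.
  rewrite EP; apply: le_trans (nrm_pow _ _) _.
  have de0 : 0 <= d * e by rewrite mulr_ge0 // ltW.
  by rewrite lerXn2r ?nnegrE ?nrm_ge0 ?addr_ge0 // ltW.
have hG := @G (d * e) k (ltac:(apply/andP; split; nra)).
have hke : k%:R * e * q <= 1 - q.
  have h := @G (- e) k (ltac:(apply/andP; split; lra)).
  rewrite mulrN opprK ge in h; nra.
have hke2 : k%:R * e <= c.
  by rewrite /c ler_pdivlMr //; move: hke; rewrite /q; lra.
have hdc : d * c = eta / (1 + eta).
  by rewrite /d; field; rewrite !gt_eqF // ?ltr_wpDl.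
have hkde : k%:R * (d * e) <= eta / (1 + eta).
  by rewrite -hdc [k%:R * _]mulrCA ler_pM2l.
set Y := (1 + d * e) ^+ k in hY hG.
have Y0 : 0 <= Y by apply: exprn_ge0; nra.
have h1 : Y * (1 - eta / (1 + eta)) <= 1.
  apply: le_trans hG; apply: ler_wpM2l => //; lra.
have hinv : 1 - eta / (1 + eta) = (1 + eta)^-1.
  by field; rewrite gt_eqF // ltr_wpDl // ltW.
rewrite hinv ler_pdivrMr ?ltr_wpDl // ?mul1r in h1.
exact: le_trans hY h1.
Qed.

End Main2.

End P3.
Import P3.

Module P4.
Import Order.TTheory GRing.Theory Num.Theory.
Import numFieldNormedType.Exports.
Local Open Scope classical_set_scope.
Local Open Scope ring_scope.

Section Main3.
Variables (R : realType) (n : nat) (N : 'cV[R]_n -> R).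
Hypothesis hN : is_vnorm N.
Hypothesis hn : (0 < n)%N.

Local Notation N0 := (@N0 R n N hN).
Local Notation nrm := (@P2.nrm R n N).
Local Notation mu := (@P2.mu R n N).
Local Notation Em := (@P3.Em R n).
Local Notation P := (@P3.P R n).
Local Notation nrm_bound := (@nrm_bound R n N hN hn).
Local Notation nrmD := (@nrmD R n N hN hn).
Local Notation nrmZ := (@nrmZ R n N hN hn).
Local Notation nrm_ge0 := (@nrm_ge0 R n N hN hn).
Local Notation claimA_lt := (@claimA_lt R n N hN hn).

Lemma claimA i t : (forall D, diag_nonneg D -> mu (- D) <= 0) ->
  0 <= t -> t <= 1 -> nrm (P i t) <= 1.
Proof.
move=> H2 t0 t1; have [tl1|] := ltP t 1; first exact: claimA_lt.
move=> t1'; have -> : t = 1 by apply/eqP; rewrite eq_le t1 t1'.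
apply/ler_addgt0Pr => eta eta0.
set K := nrm (Em i).
have K0 : 0 <= K by apply: nrm_ge0.
set h := Num.min (1/2) (eta / (K + 1)).
have h0 : 0 < h by rewrite lt_min !divr_gt0 // ltr_wpDl.
have h12 : h <= 1/2 by rewrite ge_min lexx.
have hK : h <= eta / (K + 1) by rewrite ge_min lexx orbT.
have E : P i 1 = P i (1 - h) + h *: - Em i.
  rewrite /P3.P; apply/matrixP => p q; rewrite !mxE; ring.
rewrite E; apply: le_trans (nrmD _ _) _.
have hs := claimA_lt i (1 - h) H2 (ltac:(lra)) (ltac:(lra)).
apply: lerD => //; apply: le_trans (nrmZ _ _) _.
rewrite gtr0_norm //.
have := @nrmZ (-1) (Em i); rewrite normrN normr1 mul1r scaleN1r => hN1.
apply: le_trans (ler_wpM2l (ltW h0) hN1) _.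
rewrite ler_pdivlMr ?ltr_wpDl // in hK.
have : h * K <= h * (K + 1) by rewrite ler_pM2l // lerDl.
rewrite -/K; lra.
Qed.


Lemma Emul i (v : 'cV[R]_n) j : (Em i *m v) j 0 = (j == i)%:R * v i 0.
Proof.
rewrite mxE (bigD1 i) //= big1 ?addr0; first by rewrite mxE eqxx andbT.
by move=> l li; rewrite mxE (negbTE li) andbF mul0r.
Qed.

Lemma i21 : (forall D, diag_nonneg D -> mu (- D) <= 0) -> orthant_monotonic N.
Proof.
move=> H2 x y hxy.
pose z k : 'cV[R]_n := \col_(j < n) (if (j < k)%N then x j 0 else y j 0).
have step : forall k (hk : (k < n)%N), N (z k.+1) <= N (z k).
  move=> k hk; set i := Ordinal hk.
  have [hxy1 hxy2] := hxy i.
  have [y0|yn0] := eqVneq (y i 0) 0.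
    have x0 : x i 0 = 0 by apply/eqP; rewrite -normr_le0; move: hxy2; rewrite y0 normr0.
    have -> : z k.+1 = z k; last exact: lexx.
    apply/matrixP => j l; rewrite (ord1 l) !mxE.
    have [hj|hj] := eqVneq (j : nat) k.
      have -> : j = i by apply: val_inj.
      by rewrite /= ltnSn ltnn x0 y0.
    by rewrite ltnS leq_eqVlt (negbTE hj).
  set r := x i 0 / y i 0.
  have r0 : 0 <= r.
    have -> : r = x i 0 * y i 0 / (y i 0 ^+ 2) by rewrite /r; field.
    by rewrite divr_ge0 // sqr_ge0.
  have r1 : r <= 1.
    apply: le_trans (ler_norm r) _.
    by rewrite normrM normfV ler_pdivrMr ?normr_gt0 // mul1r.
  have -> : z k.+1 = P i (1 - r) *m z k.
    rewrite /P3.P mulmxBl mul1mx -scalemxAl.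
    apply/matrixP => j l; have hE := Emul i (z k) j; rewrite mxE in hE; rewrite (ord1 l) !mxE hE.
    have [hj|hj] := eqVneq (j : nat) k.
      have ji : j = i by apply: val_inj.
      rewrite ji eqxx /= !mxE /= ltnSn ltnn /r; field.
      by rewrite yn0.
    have jni : j != i by apply: contraNN hj => /eqP ->.
    by rewrite (negbTE jni) ltnS leq_eqVlt (negbTE hj) /= mul0r mulr0 subr0.
  apply: le_trans (nrm_bound _ _) _.
  apply: ler_piMl; first exact: N0.
  by apply: claimA => //; lra.
have chain : forall k, (k <= n)%N -> N (z k) <= N (z 0).
  elim=> [|k IH] hk; first exact: lexx.
  exact: le_trans (step k hk) (IH (ltnW hk)).
have zn : z n = x by apply/matrixP => j l; rewrite (ord1 l) mxE ltn_ord.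
have z0 : z 0%N = y by apply/matrixP => j l; rewrite (ord1 l) mxE.
by have := chain n (leqnn n); rewrite zn z0.
Qed.

End Main3.


End P4.
Import P4.

Local Open Scope ring_scope.

Theorem theorem1 (R : realType) (n : nat) (hn : (0 < n)%N)
  (N : 'cV[R]_n -> R) (hN : is_vnorm N) :
  (orthant_monotonic N <->
     (forall D : 'M[R]_n, diag_nonneg D -> matrix_measure N (- D) <= 0)) /\
  ((forall D : 'M[R]_n, diag_nonneg D -> matrix_measure N (- D) <= 0) <->
     (forall D : 'M[R]_n, diag_nonneg D -> matrix_measure N D = max_diag D)) /\
  ((forall D : 'M[R]_n, diag_nonneg D -> matrix_measure N D = max_diag D) <->
     (exists A : 'M[R]_n,
        forall D : 'M[R]_n, diag_nonneg D -> matrix_measure N (A - D) < 0)).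
Proof.
have h13 := @i13 R n N hN hn.
have h32 := @i32 R n N hN hn.
have h34 := @i34 R n N hN hn.
have h42 := @i42 R n N hN hn.
have h21 := @i21 R n N hN hn.
split; [split|split; split].
- by move=> h; apply: h32; apply: h13.
- exact: h21.
- by move=> h; apply: h13; apply: h21.
- exact: h32.
- exact: h34.
- by move=> h; apply: h13; apply: h21; apply: h42.
Qed.
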